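(* For every $d\ge 2$, $$\mathsf{SR}+\mathsf{AxThExp}\not\models\neg\exists\mathsf{FTLBody}\quad\text{and}\quad\mathsf{SR}+\mathsf{AxThExp}\not\models\exists\mathsf{FTLBody};$$ that is, both $\mathsf{SR}+\mathsf{AxThExp}+\exists\mathsf{FTLBody}$ and $\mathsf{SR}+\mathsf{AxThExp}+\neg\exists\mathsf{FTLBody}$ have models (indeed with quantity part the ordered field of real numbers).
   Context: Language: two-sorted first-order language with sorts $B$ (bodies), $Q$ (quantities), unary $\mathsf{IOb}$ on $B$, binary $\mathsf{Ph}$ on $B$, operations $+,\cdot$ and relation $\le$ on $Q$, and $(d+2)$-ary $\mathsf{W}$ (first two arguments of sort $B$, rest of sort $Q$). $\Sigma\models\varphi$ means $\varphi$ holds in every model of $\Sigma$. $\mathsf{time}(\bar x,\bar y)=x_1-y_1$, $\mathsf{space}^2(\bar x,\bar y)=\sum_{i=2}^d(x_i-y_i)^2$. Write $\mathsf{ev}_m(\bar x)=\mathsf{ev}_k(\bar y)$ for $\forall b[\mathsf{W}(m,b,\bar x)\leftrightarrow\mathsf{W}(k,b,\bar y)]$. $\mathsf{SR}=\mathsf{SPR}^++\mathsf{AxLight}+\mathsf{AxOField}+\mathsf{AxEv}+\mathsf{AxSelf}+\mathsf{AxSymD}$, where: $\mathsf{SPR}^+$: for every formula $\varphi(h,\bar x)$ with at most one free variable $h$ of sort $B$, $\forall m k\bar x[\mathsf{IOb}(m)\land\mathsf{IOb}(k)\to(\varphi(m,\bar x)\leftrightarrow\varphi(k,\bar x))]$.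 $\mathsf{AxLight}$: $\exists m\,c\,[\mathsf{IOb}(m)\land c>0\land\forall\bar x\bar y\,(\exists p b[\mathsf{Ph}(p,b)\land\mathsf{W}(m,p,\bar x)\land\mathsf{W}(m,p,\bar y)]\leftrightarrow \mathsf{space}^2(\bar x,\bar y)=c^2\mathsf{time}(\bar x,\bar y)^2)]$. $\mathsf{AxOField}$: $\langle Q,+,\cdot,\le\rangle$ is an ordered field. $\mathsf{AxEv}$: $\mathsf{IOb}(m)\land\mathsf{IOb}(k)\to\exists\bar y\,\mathsf{ev}_m(\bar x)=\mathsf{ev}_k(\bar y)$. $\mathsf{AxSelf}$: $\mathsf{IOb}(m)\to\forall\bar x[\mathsf{W}(m,m,\bar x)\leftrightarrow x_2=\dots=x_d=0]$. $\mathsf{AxSymD}$: (i) if $\mathsf{IOb}(m),\mathsf{IOb}(k)$, $x_1=y_1$, $x'_1=y'_1$, $\mathsf{ev}_m(\bar x)=\mathsf{ev}_k(\bar x')$ and $\mathsf{ev}_m(\bar y)=\mathsf{ev}_k(\bar y')$, then $\mathsf{space}^2(\bar x,\bar y)=\mathsf{space}^2(\bar x',\bar y')$; (ii) $\mathsf{IOb}(m)\to\exists pb[\mathsf{Ph}(p,b)\land\mathsf{W}(m,p,0,\dots,0)\land\mathsf{W}(m,p,1,1,0,\dots,0)]$. Speed of light: $\mathsf{c}(m,v)$ is defined by $v>0\land\forall\bar x\bar y(\exists pb[\mathsf{Ph}(p,b)\land\mathsf{W}(m,p,\bar x)\land\mathsf{W}(m,p,\bar y)]\to\mathsf{space}^2(\bar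 x,\bar y)=v^2\mathsf{time}(\bar x,\bar y)^2)$; in models of $\mathsf{SR}$ it has a unique witness $\mathsf{c}_m$ for each inertial $m$. $\mathsf{AxThExp}$: $\exists h\,\mathsf{IOb}(h)\land\forall m\bar x\bar y\,(\mathsf{IOb}(m)\land\mathsf{space}^2(\bar x,\bar y)<\mathsf{c}_m^2\mathsf{time}(\bar x,\bar y)^2\to\exists k[\mathsf{IOb}(k)\land\mathsf{W}(m,k,\bar x)\land\mathsf{W}(m,k,\bar y)])$. $\exists\mathsf{FTLBody}$: $\exists m\,b\,\bar x\,\bar y\,[\mathsf{IOb}(m)\land\mathsf{W}(m,b,\bar x)\land\mathsf{W}(m,b,\bar y)\land\mathsf{space}^2(\bar x,\bar y)>\mathsf{c}_m^2\mathsf{time}(\bar x,\bar y)^2]$. *)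

(* Defs.v *)
From Stdlib Require Import Reals.
From mathcomp Require Import all_boot.
Set Implicit Arguments.
Unset Strict Implicit.
Unset Printing Implicit Defensive.

Open Scope R_scope.

(* Coordinates: index 0 is time (x_1 in the paper), indices 1..d-1 are  *)
(* space (x_2..x_d in the paper).                                       *)
Record model (d : nat) := Model {
  Body : Type;
  IOb : Body -> Prop;
  Ph : Body -> Body -> Prop;
  W : Body -> Body -> ('I_d -> R) -> Prop
}.

Section SRTheory.
Variable d : nat.
Variable M : model d.

Local Notation B := (Body M).
Local Notation IOb := (@IOb d M).
Local Notation Ph := (@Ph d M).
Local Notation W := (@W d M).

(* the k-th coordinate (0-based) of a point, 0 if k >= d *)
Definition coord (x : 'I_d -> R) (k : nat) : R :=
  match @insub nat (fun k => (k < d)%N) 'I_d k with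
  | Some i => x i
  | None => 0
  end.

Definition time (x y : 'I_d -> R) : R := coord x 0 - coord y 0.
Definition space2 (x y : 'I_d -> R) : R :=
  \big[Rplus/0]_(1 <= k < d) ((coord x k - coord y k) * (coord x k - coord y k)).

Definition mkvec (f : nat -> R) : 'I_d -> R := fun i => f (nat_of_ord i).
Definition origin : 'I_d -> R := mkvec (fun _ => 0).
Definition e11 : 'I_d -> R := mkvec (fun k => if (k <= 1)%N then 1 else 0).

Definition ev_eq (m : B) (x : 'I_d -> R) (k : B) (y : 'I_d -> R) : Prop :=
  forall b, W m b x <-> W k b y.

Definition photon_through (m : B) (x y : 'I_d -> R) : Prop :=
  exists p b, Ph p b /\ W m p x /\ W m p y.

Inductive qterm : Type :=
  | QVar : nat -> qterm
  | QAdd : qterm -> qterm -> qterm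
  | QMul : qterm -> qterm -> qterm.

Inductive form : Type :=
  | FIOb : nat -> form
  | FPh : nat -> nat -> form
  | FW : nat -> nat -> ('I_d -> qterm) -> form
  | FEqB : nat -> nat -> form
  | FEqQ : qterm -> qterm -> form
  | FLe : qterm -> qterm -> form
  | FFalse : form
  | FNot : form -> form
  | FAnd : form -> form -> form
  | FOr : form -> form -> form
  | FImp : form -> form -> form
  | FForallB : nat -> form -> form
  | FExistsB : nat -> form -> form
  | FForallQ : nat -> form -> form
  | FExistsQ : nat -> form -> form.

Fixpoint qeval (sq : nat -> R) (t : qterm) : R :=
  match t with
  | QVar n => sq n
  | QAdd t1 t2 => qeval sq t1 + qeval sq t2
  | QMul t1 t2 => qeval sq t1 * qeval sq t2
  end.

Definition upd {T : Type} (s : nat -> T) (n : nat) (v : T) : nat -> T :=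
  fun k => if (k == n)%N then v else s k.

Fixpoint holds (sb : nat -> B) (sq : nat -> R) (f : form) : Prop :=
  match f with
  | FIOb b => IOb (sb b)
  | FPh b1 b2 => Ph (sb b1) (sb b2)
  | FW b1 b2 ts => W (sb b1) (sb b2) (fun i => qeval sq (ts i))
  | FEqB b1 b2 => sb b1 = sb b2
  | FEqQ t1 t2 => qeval sq t1 = qeval sq t2
  | FLe t1 t2 => qeval sq t1 <= qeval sq t2
  | FFalse => False
  | FNot g => ~ holds sb sq g
  | FAnd g h => holds sb sq g /\ holds sb sq h
  | FOr g h => holds sb sq g \/ holds sb sq h
  | FImp g h => holds sb sq g -> holds sb sq h
  | FForallB v g => forall b : B, holds (upd sb v b) sq g
  | FExistsB v g => exists b : B, holds (upd sb v b) sq g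
  | FForallQ v g => forall r : R, holds sb (upd sq v r) g
  | FExistsQ v g => exists r : R, holds sb (upd sq v r) g
  end.

Fixpoint freeB (f : form) (n : nat) : Prop :=
  match f with
  | FIOb b => b = n
  | FPh b1 b2 => b1 = n \/ b2 = n
  | FW b1 b2 _ => b1 = n \/ b2 = n
  | FEqB b1 b2 => b1 = n \/ b2 = n
  | FEqQ _ _ => False
  | FLe _ _ => False
  | FFalse => False
  | FNot g => freeB g n
  | FAnd g h => freeB g n \/ freeB h n
  | FOr g h => freeB g n \/ freeB h n
  | FImp g h => freeB g n \/ freeB h n
  | FForallB v g => v <> n /\ freeB g n
  | FExistsB v g => v <> n /\ freeB g n
  | FForallQ _ g => freeB g n
  | FExistsQ _ g => freeB g n
  end.

(* SPR+: for every formula phi(h, xbar) whose only free body variable is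
   (at most) h (= body variable 0); xbar are its free quantity variables. *)
Definition SPRplus : Prop :=
  forall phi : form, (forall n, freeB phi n -> n = 0%N) ->
  forall m k : B, IOb m -> IOb k ->
  forall (sb : nat -> B) (sq : nat -> R),
    holds (upd sb 0%N m) sq phi <-> holds (upd sb 0%N k) sq phi.

Definition AxLight : Prop :=
  exists (m : B) (c : R), IOb m /\ 0 < c /\
    forall x y, photon_through m x y <-> space2 x y = c * c * (time x y * time x y).

(* AxOField holds automatically since Q is the real field. *)

Definition AxEv : Prop :=
  forall (m k : B) x, IOb m -> IOb k -> exists y, ev_eq m x k y.

Definition AxSelf : Prop :=
  forall m : B, IOb m -> forall x,
    W m m x <-> (forall i : 'I_d, (0 < i)%N -> x i = 0).

Definition AxSymD : Prop :=
  (forall (m k : B) x y x' y', IOb m -> IOb k ->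
     coord x 0 = coord y 0 -> coord x' 0 = coord y' 0 ->
     ev_eq m x k x' -> ev_eq m y k y' ->
     space2 x y = space2 x' y')
  /\ (forall m : B, IOb m -> photon_through m origin e11).

Definition SR : Prop := SPRplus /\ AxLight /\ AxEv /\ AxSelf /\ AxSymD.

Definition is_c (m : B) (v : R) : Prop :=
  0 < v /\ forall x y, photon_through m x y -> space2 x y = v * v * (time x y * time x y).

(* c_m is the (in models of SR, unique) witness of is_c m *)
Definition AxThExp : Prop :=
  (exists h : B, IOb h) /\
  forall (m : B) x y (v : R), IOb m -> is_c m v ->
    space2 x y < v * v * (time x y * time x y) ->
    exists k : B, IOb k /\ W m k x /\ W m k y.

Definition ExFTLBody : Prop :=
  exists (m b : B) x y (v : R), IOb m /\ is_c m v /\ W m b x /\ W m b y /\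
    space2 x y > v * v * (time x y * time x y).

End SRTheory.

(* Main.v *)
Require Import Defs.
From Stdlib Require Import Reals Lra FunctionalExtensionality.
From mathcomp Require Import all_boot.
Set Implicit Arguments.
Unset Strict Implicit.
Open Scope R_scope.

Definition pt (d : nat) := 'I_d -> R.

Lemma sum_lin (r : seq nat) (F G : nat -> R) a b :
  \big[Rplus/0]_(k <- r) (a * F k + b * G k) =
  a * \big[Rplus/0]_(k <- r) F k + b * \big[Rplus/0]_(k <- r) G k.
Proof. elim: r => [|x r IH]; rewrite ?big_nil ?big_cons ?IH; lra. Qed.

Lemma sum_ext (r : seq nat) (F G : nat -> R) :
  (forall k, F k = G k) -> \big[Rplus/0]_(k <- r) F k = \big[Rplus/0]_(k <- r) G k.
Proof. move=> H; elim: r => [|x r IH]; rewrite ?big_nil ?big_cons ?IH ?H //. Qed.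

Lemma sum_zero (r : seq nat) (F : nat -> R) :
  (forall k, F k = 0) -> \big[Rplus/0]_(k <- r) F k = 0.
Proof. move=> H; elim: r => [|x r IH]; rewrite ?big_nil ?big_cons ?IH ?H //; lra. Qed.

Definition lc {d} a (u : pt d) b (w : pt d) : pt d := fun i => a * u i + b * w i.

Lemma coord_lc {d} a (u : pt d) b w k : coord (lc a u b w) k = a * coord u k + b * coord w k.
Proof. rewrite /coord; case: insub => [i|] //=; lra. Qed.

Lemma coord_mkvec {d} (f : nat -> R) k : (k < d)%N -> coord (@mkvec d f) k = f k.
Proof. move=> hk; rewrite /coord insubT //=. Qed.
Definition Bf {d} (u w : pt d) : R :=
  \big[Rplus/0]_(1 <= k < d) (coord u k * coord w k) - coord u 0 * coord w 0.

Lemma Bf_sym {d} (u w : pt d) : Bf u w = Bf w u.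
Proof. rewrite /Bf (@sum_ext _ _ (fun k => coord w k * coord u k)); first ring.
move=> k; ring. Qed.

Lemma Bf_lc_l {d} a (u : pt d) b w z : Bf (lc a u b w) z = a * Bf u z + b * Bf w z.
Proof. rewrite /Bf (@sum_ext _ _ (fun k => a * (coord u k * coord z k) + b * (coord w k * coord z k))).
  by rewrite sum_lin coord_lc; ring.
move=> k; rewrite coord_lc; ring. Qed.

Lemma Bf_lc_r {d} a (u : pt d) b w z : Bf z (lc a u b w) = a * Bf z u + b * Bf z w.
Proof. by rewrite Bf_sym Bf_lc_l (Bf_sym u) (Bf_sym w). Qed.

Definition interval {d} (x y : pt d) := space2 x y - time x y * time x y.

Lemma interval_B {d} (x y : pt d) : interval x y = Bf (lc 1 x (-1) y) (lc 1 x (-1) y).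
Proof. rewrite /interval /space2 /time /Bf (@sum_ext _ (fun k => coord (lc 1 x (-1) y) k * coord (lc 1 x (-1) y) k) (fun k => (coord x k - coord y k) * (coord x k - coord y k))).
  rewrite coord_lc; ring.
move=> k; rewrite coord_lc; ring. Qed.

Lemma interval_exp {d} (x y : pt d) : interval x y = Bf x x - 2 * Bf x y + Bf y y.
Proof. rewrite interval_B !Bf_lc_l !Bf_lc_r (Bf_sym y x); ring. Qed.

Lemma interval_sym {d} (x y : pt d) : interval x y = interval y x.
Proof. rewrite !interval_exp (Bf_sym y x); ring. Qed.

Lemma interval_refl {d} (x : pt d) : interval x x = 0.
Proof. rewrite interval_exp; ring. Qed.
Definition tvec {d} (t : R) : pt d := @mkvec d (fun k => if (k == 0)%N then t else 0).

Lemma coord_tvec0 {d} t : (0 < d)%N -> coord (@tvec d t) 0 = t.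
Proof. by move=> h; rewrite coord_mkvec. Qed.

Lemma coord_tvecS {d} t k : (k != 0)%N -> coord (@tvec d t) k = 0.
Proof. move=> hk; rewrite /coord /tvec /mkvec; case: insubP => [i _ hi|] //=.
by rewrite hi (negbTE hk). Qed.

Lemma sum_zero_ge (n m : nat) (F : nat -> R) :
  (forall k, (m <= k)%N -> F k = 0) -> \big[Rplus/0]_(k <- iota m n) F k = 0.
Proof. elim: n m => [|n IH] m H /=; rewrite ?big_nil ?big_cons //.
rewrite IH // ?H //; [lra|]. move=> k hk; apply: H; exact: ltnW. Qed.

Lemma Bf_tvec {d} a b : (0 < d)%N -> Bf (@tvec d a) (tvec b) = - (a * b).
Proof. move=> hd; rewrite /Bf sum_zero_ge // ?coord_tvec0 //; first lra.
move=> k hk; rewrite coord_tvecS; [lra|]. by rewrite -lt0n. Qed.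

Lemma tvec_lc {d} s : @tvec d s = lc s (tvec 1) 0 (tvec 1).
Proof. apply: functional_extensionality => i; rewrite /lc /tvec /mkvec.
case: (_ == _); ring. Qed.

Lemma interval_tvec {d} a b : (0 < d)%N -> interval (@tvec d a) (tvec b) = - ((a - b) * (a - b)).
Proof. move=> hd; rewrite interval_exp !Bf_tvec //; ring. Qed.

Lemma space2_time_e11 {d} : (2 <= d)%N ->
  space2 (@origin d) (@e11 d) = 1 /\ time (@origin d) (@e11 d) = -1.
Proof. move=> hd; split.
- rewrite /space2.
  have -> : index_iota 1 d = (1 :: iota 2 (d - 2))%N.
    rewrite /index_iota. case: d hd => [|[|n]] //= _. by rewrite !subSS !subn0.
  rewrite big_cons sum_zero_ge //.
  + rewrite !coord_mkvec //. simpl; ring.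
  + move=> k hk. rewrite /coord; case: insubP => [i hi hv|] //=; [|lra].
    rewrite /origin /e11 /mkvec hv. clear hi hv; case: k hk => [|[|k]] //= _. ring.
- rewrite /time !coord_mkvec //=; try ring; by apply: leq_trans hd.
Qed.
Definition Lor {d} (f : pt d -> pt d) :=
  (forall x y, interval (f x) (f y) = interval x y) /\ exists h, cancel f h /\ cancel h f.

Lemma Lor_id {d} : Lor (fun x : pt d => x).
Proof. split=> //; by exists (fun x => x). Qed.

Lemma Lor_comp {d} (f g : pt d -> pt d) : Lor f -> Lor g -> Lor (fun x => g (f x)).
Proof. move=> [f1 [fh [c1 c2]]] [g1 [gh [c3 c4]]]; split.
  by move=> x y; rewrite g1 f1.
exists (fun x => fh (gh x)); split=> x; by rewrite ?c3 ?c1 ?c4 ?c2. Qed.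

Lemma Lor_inv {d} (f h : pt d -> pt d) : Lor f -> cancel f h -> cancel h f -> Lor h.
Proof. move=> [f1 _] c1 c2; split; last by exists f.
move=> x y; by rewrite -f1 !c2. Qed.

Lemma Lor_inj {d} (f : pt d -> pt d) : Lor f -> injective f.
Proof. move=> [_ [h [c1 _]]]; exact: can_inj c1. Qed.

Inductive body (d : nat) := Obs of (pt d -> pt d) | Ph2 of pt d & pt d.

Definition inW {d} (ftl : bool) (b : body d) (P : pt d) : Prop :=
  match b with
  | Obs f => Lor f /\ exists t, P = f (tvec t)
  | Ph2 p q => (ftl = true \/ interval p q <= 0) /\ (P = p \/ P = q)
  end.

Definition IObM {d} (b : body d) : Prop := match b with Obs f => Lor f | _ => False end.
Definition PhM {d} (b _ : body d) : Prop := match b with Ph2 p q => interval p q = 0 | _ => False end.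
Definition WM {d} ftl (m b : body d) (x : pt d) : Prop :=
  match m with Obs g => inW ftl b (g x) | _ => False end.

Definition mdl d ftl : model d := @Model d (body d) IObM PhM (WM ftl).

Lemma photon_iff {d} ftl (m : pt d -> pt d) x y : Lor m ->
  @photon_through d (mdl d ftl) (Obs m) x y <-> interval x y = 0.
Proof. move=> hm; have hm1 := proj1 hm; split.
- move=> [[f|p q] [b [/= hpq [[_ hx] [_ hy]]]]]; first done.
  rewrite -hm1.
  case: hx => ->; case: hy => ->; by rewrite ?interval_refl ?hpq // interval_sym.
- move=> h0. exists (Ph2 (m x) (m y)), (Ph2 (m x) (m y)) => /=.
  rewrite hm1; split=> //; split; split=> //; try (right; lra); by [left|right].
Qed.

Lemma is_c1 {d} ftl (m : pt d -> pt d) : Lor m -> @is_c d (mdl d ftl) (Obs m) 1.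
Proof. move=> hm; split; first lra.
move=> x y /(photon_iff _ _ _ hm); rewrite /interval; lra. Qed.

Lemma is_c_v {d} ftl (m : pt d -> pt d) v : (2 <= d)%N -> Lor m ->
  @is_c d (mdl d ftl) (Obs m) v -> v * v = 1.
Proof. move=> hd hm [hv H].
have := H (@origin d) (@e11 d). case: (space2_time_e11 hd) => -> ->.
move=> h; have : 1 = v * v * (-1 * -1) by apply: h; apply/(photon_iff _ _ _ hm);
  rewrite /interval; case: (space2_time_e11 hd) => -> ->; ring.
lra. Qed.
Lemma axlight {d} ftl : @AxLight d (mdl d ftl).
Proof. exists (Obs (fun x => x)), 1; split; first exact: Lor_id. split; first lra.
move=> x y; rewrite photon_iff; last exact: Lor_id. rewrite /interval; lra. Qed.

Lemma axev {d} ftl : @AxEv d (mdl d ftl).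
Proof. move=> [fm|//] [fk|//] x /= hm [hk1 [h [c1 c2]]].
exists (h (fm x)) => b /=. by rewrite c2. Qed.

Lemma ax_self {d} ftl : (2 <= d)%N -> @AxSelf d (mdl d ftl).
Proof. move=> hd [m|//] /= hm x; split.
- move=> [_ [t /(Lor_inj hm) ->]] i hi. rewrite /tvec /mkvec.
  by move: hi; rewrite lt0n => /negbTE ->.
- move=> H; split=> //. have h0 : (0 < d)%N by apply: leq_trans hd.
  exists (x (Ordinal h0)); congr m; apply: functional_extensionality => i.
  rewrite /tvec /mkvec. case: (boolP (nat_of_ord i == 0)%N) => hi.
  + congr x; apply: val_inj => /=. exact/eqP.
  + apply: H; by rewrite lt0n.
Qed.

Lemma axsymd {d} ftl : (2 <= d)%N -> @AxSymD d (mdl d ftl).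
Proof. move=> hd; split.
- move=> [fm|//] [fk|//] x y x' y' /= hm hk hxy hxy' ex ey.
  have ev : forall z z', @ev_eq d (mdl d ftl) (Obs fm) z (Obs fk) z' -> fk z' = fm z.
    move=> z z' e. have := proj1 (e (Ph2 (fm z) (fm z))).
    rewrite /= interval_refl. case=> [|_ [] //]. split; [right; lra|by left].
  have e1 := ev _ _ ex; have e2 := ev _ _ ey.
  have : interval x y = interval x' y'.
    by rewrite -(proj1 hm x y) -(proj1 hk x' y') e1 e2.
  rewrite /interval /time hxy hxy'. lra.
- move=> [m|//] /= hm. apply/photon_iff => //.
  rewrite /interval; case: (space2_time_e11 hd) => -> ->; ring.
Qed.
Definition refl {d} (w z : pt d) : pt d := lc 1 z (- (2 * Bf z w / Bf w w)) w.

Lemma Bf_refl {d} (w z1 z2 : pt d) : Bf w w <> 0 -> Bf (refl w z1) (refl w z2) = Bf z1 z2.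
Proof. move=> hw; rewrite /refl !Bf_lc_l !Bf_lc_r (Bf_sym w z2). field. exact: hw. Qed.

Lemma refl_invol {d} (w z : pt d) : Bf w w <> 0 -> refl w (refl w z) = z.
Proof. move=> hw.
have hB : Bf (refl w z) w = - Bf z w by rewrite /refl Bf_lc_l; field.
apply: functional_extensionality => i. rewrite {1}/refl /lc hB /refl /lc. field. exact: hw. Qed.

Definition kmap {d} (P : pt d) eps w (z : pt d) : pt d := lc 1 P eps (refl w z).

Lemma kmap_Lor {d} (P : pt d) eps w : eps * eps = 1 -> Bf w w <> 0 -> Lor (kmap P eps w).
Proof. move=> he hw; split.
- move=> z1 z2; rewrite !interval_exp /kmap /refl !Bf_lc_l !Bf_lc_r.
  rewrite (Bf_sym w P) (Bf_sym z1 P) (Bf_sym z2 P) (Bf_sym w z1) (Bf_sym w z2).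
  have : eps = 1 \/ eps = -1 by nra.
  case=> ->; field; exact: hw.
- exists (fun p => refl w (lc eps p (- eps) P)); split.
  + move=> z /=. have -> : lc eps (kmap P eps w z) (- eps) P = refl w z.
      apply: functional_extensionality => i; rewrite /kmap /lc.
      have : eps = 1 \/ eps = -1 by nra.
      case=> ->; ring.
    exact: refl_invol.
  + move=> p /=. rewrite /kmap refl_invol //. apply: functional_extensionality => i; rewrite /lc.
    have : eps = 1 \/ eps = -1 by nra.
    case=> ->; ring.
Qed.
Lemma kmap_hits {d} (P e0 u : pt d) eps s : Bf e0 e0 = -1 -> Bf u u = -1 ->
  (eps = 1 \/ eps = -1) -> Bf (lc 1 e0 (-eps) u) (lc 1 e0 (-eps) u) <> 0 ->
  kmap P eps (lc 1 e0 (-eps) u) (lc s e0 0 e0) = lc 1 P s u.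
Proof. move=> h0 hu he hw.
have hw' := hw. rewrite !Bf_lc_l !Bf_lc_r h0 hu (Bf_sym u e0) in hw'.
apply: functional_extensionality => i.
rewrite /kmap /refl {1 2}/lc !Bf_lc_l !Bf_lc_r h0 hu (Bf_sym u e0) /lc.
case: he hw' => -> hw'; field; lra.
Qed.

Lemma timelike_obs {d} (P R : pt d) : (0 < d)%N -> interval P R < 0 ->
  exists k, Lor k /\ (exists t, P = k (tvec t)) /\ (exists t, R = k (tvec t)).
Proof. move=> hd hPR.
have hD : Bf (lc 1 R (-1) P) (lc 1 R (-1) P) < 0 by rewrite -interval_B interval_sym.
move: hD; set D := lc 1 R (-1) P => hD.
have eD : forall i, D i = R i - P i by move=> i; rewrite /D /lc; ring.
clearbody D.
have hq : 0 < - Bf D D by lra.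
have hs := sqrt_lt_R0 _ hq. have hss := sqrt_sqrt _ (Rlt_le _ _ hq).
move: hs hss; set s := sqrt _ => hs hss. clearbody s.
have hu : Bf (lc (1/s) D 0 D) (lc (1/s) D 0 D) = -1.
  rewrite !Bf_lc_l !Bf_lc_r. have -> : Bf D D = - (s * s) by lra. field; lra.
have hR : R = lc 1 P s (lc (1/s) D 0 D).
  apply: functional_extensionality => i; rewrite /lc eD. field; lra.
move: hu hR; set u := lc (1/s) D 0 D => hu hR. clearbody u.
have h0 : Bf (@tvec d 1) (tvec 1) = -1 by rewrite Bf_tvec //; ring.
move: h0; set e0 := @tvec d 1 => h0.
have [eps [he hw]] : exists eps, (eps = 1 \/ eps = -1) /\
    Bf (lc 1 e0 (-eps) u) (lc 1 e0 (-eps) u) <> 0.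
  case: (Req_dec_T (Bf e0 u) (-1)) => hb; [exists (-1)|exists 1];
  (split; [lra|]); rewrite !Bf_lc_l !Bf_lc_r h0 hu (Bf_sym u e0); lra.
exists (kmap P eps (lc 1 e0 (-eps) u)); split.
  apply: kmap_Lor => //; case: he => ->; ring.
split.
- exists 0. rewrite tvec_lc -/e0.
  have hz : Bf (lc 0 e0 0 e0) (lc 1 e0 (-eps) u) = 0 by rewrite Bf_lc_l; ring.
  rewrite /kmap /refl hz.
  have -> : 2 * 0 / Bf (lc 1 e0 (- eps) u) (lc 1 e0 (- eps) u) = 0 by rewrite /Rdiv; ring.
  apply: functional_extensionality => i; rewrite /lc; ring.
- exists s. by rewrite tvec_lc -/e0 kmap_hits.
Qed.
Lemma axthexp {d} ftl : (2 <= d)%N -> @AxThExp d (mdl d ftl).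
Proof. move=> hd; split; first by exists (Obs (fun x => x)); exact: Lor_id.
move=> [m|//] x y v /= hm hc hlt. have hv := is_c_v hd hm hc.
have hi : interval (m x) (m y) < 0 by rewrite (proj1 hm); rewrite /interval; rewrite hv in hlt; lra.
have [k [hk [[t1 e1] [t2 e2]]]] := timelike_obs (leq_trans (isT : (0 < 2)%N) hd) hi.
exists (Obs k); split=> //; split; split=> //; by [exists t1|exists t2].
Qed.

Lemma space2_e0_e11 {d} : (2 <= d)%N ->
  space2 (@tvec d 1) (@e11 d) = 1 /\ time (@tvec d 1) (@e11 d) = 0.
Proof. move=> hd; split.
- rewrite /space2.
  have -> : index_iota 1 d = (1 :: iota 2 (d - 2))%N.
    rewrite /index_iota. case: d hd => [|[|n]] //= _. by rewrite !subSS !subn0.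
  rewrite big_cons sum_zero_ge //.
  + rewrite coord_tvecS // coord_mkvec //. simpl; ring.
  + move=> k hk. rewrite coord_tvecS; last by case: k hk.
    rewrite /coord; case: insubP => [i hi hv|] //=; [|lra].
    rewrite /e11 /mkvec hv. clear hi hv; case: k hk => [|[|k]] //= _. ring.
- have h0 : (0 < d)%N by apply: leq_trans hd.
  rewrite /time coord_tvec0 // coord_mkvec //=. ring.
Qed.

Lemma exftl {d} : (2 <= d)%N -> @ExFTLBody d (mdl d true).
Proof. move=> hd. exists (Obs (fun x => x)), (Ph2 (tvec 1) (@e11 d)), (tvec 1), (@e11 d), 1.
split; first exact: Lor_id. split; first exact: is_c1 Lor_id.
split; first by split; [left|left]. split; first by split; [left|right].
case: (space2_e0_e11 hd) => -> ->. lra. Qed.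

Lemma noftl {d} : (2 <= d)%N -> ~ @ExFTLBody d (mdl d false).
Proof. move=> hd [m [b [x [y [v [hm [hc [hx [hy hgt]]]]]]]]].
case: m hm hc hx hy => [fm|//] /= hm hc hx hy.
have hv := is_c_v hd hm hc. rewrite hv in hgt.
have hi : interval (fm x) (fm y) > 0 by rewrite (proj1 hm) /interval; lra.
have h0 : (0 < d)%N by apply: leq_trans hd.
case: b hx hy => [f|p q] /=.
- move=> [hf [t1 e1]] [_ [t2 e2]]. rewrite e1 e2 (proj1 hf) interval_tvec // in hi. have := Rle_0_sqr (t1 - t2); rewrite /Rsqr; lra.
- move=> [[//|hpq] ex] [_ ey].
  case: ex ey hi => -> [] ->; rewrite ?interval_refl //; try lra; rewrite interval_sym; lra.
Qed.
Lemma holds_free {d} (M : model d) (f : form d) : forall (sb sb' : nat -> Body M) sq,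
  (forall n, freeB f n -> sb n = sb' n) -> (holds sb sq f <-> holds sb' sq f).
Proof.
elim: f => /=.
- move=> b sb sb' sq H; by rewrite H.
- move=> b1 b2 sb sb' sq H; by rewrite !H; auto.
- move=> b1 b2 ts sb sb' sq H; by rewrite !H; auto.
- move=> b1 b2 sb sb' sq H; by rewrite !H; auto.
- done. - done. - done.
- move=> g IH sb sb' sq H; by rewrite (IH sb sb').
- move=> g IHg h IHh sb sb' sq H; rewrite (IHg sb sb') ?(IHh sb sb') //; auto.
- move=> g IHg h IHh sb sb' sq H; rewrite (IHg sb sb') ?(IHh sb sb') //; auto.
- move=> g IHg h IHh sb sb' sq H; rewrite (IHg sb sb') ?(IHh sb sb') //; auto.
- move=> v g IH sb sb' sq H; split=> H1 b; [rewrite -(IH (upd sb v b))|rewrite (IH (upd sb v b) (upd sb' v b))] => //;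
  move=> n hn; rewrite /upd; case: eqP => // /eqP hnv; apply: H; split=> //; apply/eqP; rewrite eq_sym; exact: hnv.
- move=> v g IH sb sb' sq H; split=> [[b H1]|[b H1]]; exists b;
  [rewrite -(IH (upd sb v b))|rewrite (IH (upd sb v b) (upd sb' v b))] => //;
  move=> n hn; rewrite /upd; case: eqP => // /eqP hnv; apply: H; split=> //; apply/eqP; rewrite eq_sym; exact: hnv.
- move=> v g IH sb sb' sq H; split=> H1 r; [rewrite -(IH sb sb')|rewrite (IH sb sb')] => //.
- move=> v g IH sb sb' sq H; split=> [[r H1]|[r H1]]; exists r; [rewrite -(IH sb sb')|rewrite (IH sb sb')] => //.
Qed.
Definition sigma {d} (g : pt d -> pt d) (b : body d) : body d :=
  match b with Obs f => Obs (fun x => g (f x)) | Ph2 p q => Ph2 (g p) (g q) end.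

Lemma sigma_cancel {d} (g h : pt d -> pt d) : cancel g h -> cancel (sigma g) (sigma h).
Proof. move=> c [f|p q] /=; last by rewrite !c.
congr Obs; apply: functional_extensionality => x; by rewrite c. Qed.

Lemma Lor_sigma {d} (g h f : pt d -> pt d) : Lor g -> cancel g h -> cancel h g ->
  Lor (fun x => g (f x)) <-> Lor f.
Proof. move=> hg c1 c2; split=> hf; last exact: Lor_comp.
have -> : f = (fun x => h (g (f x))) by apply: functional_extensionality => x; rewrite c1.
apply: Lor_comp hf _. exact: Lor_inv hg c1 c2. Qed.

Lemma inW_sigma {d} ftl (g h : pt d -> pt d) b P : Lor g -> cancel g h -> cancel h g ->
  inW ftl (sigma g b) (g P) <-> inW ftl b P.
Proof. move=> hg c1 c2; have gi := Lor_inj hg.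
case: b => [f|p q] /=.
- rewrite (Lor_sigma f hg c1 c2). split=> [[hf [t /gi e]]|[hf [t e]]]; split=> //; exists t => //. by rewrite e.
- rewrite (proj1 hg). split=> [[a [/gi e|/gi e]]|[a [e|e]]]; split=> //; rewrite ?e; by [left|right].
Qed.

Lemma holds_sigma {d} ftl (g h : pt d -> pt d) : Lor g -> cancel g h -> cancel h g ->
  forall (f : form d) (sb : nat -> body d) sq,
  @holds d (mdl d ftl) (fun n => sigma g (sb n)) sq f <-> @holds d (mdl d ftl) sb sq f.
Proof. move=> hg c1 c2; have si := can_inj (sigma_cancel c1).
have sc := sigma_cancel c2.
elim => /=.
- move=> b sb sq. case: (sb b) => //= f. exact: Lor_sigma.
- move=> b1 b2 sb sq. case: (sb b1) => //= p q. by rewrite (proj1 hg).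
- move=> b1 b2 ts sb sq. case: (sb b1) => //= fm. exact: inW_sigma.
- move=> b1 b2 sb sq; split=> [/si|->] //.
- done. - done. - done.
- move=> g0 IH sb sq; by rewrite IH.
- move=> g0 IHg h0 IHh sb sq; by rewrite IHg IHh.
- move=> g0 IHg h0 IHh sb sq; by rewrite IHg IHh.
- move=> g0 IHg h0 IHh sb sq; by rewrite IHg IHh.
- move=> v g0 IH sb sq.
  have E : forall b, upd (fun n => sigma g (sb n)) v (sigma g b) = (fun n => sigma g (upd sb v b n)).
    move=> b; apply: functional_extensionality => n; rewrite /upd; by case: (_ == _).
  split=> H b.
  + rewrite -IH -E. exact: H.
  + rewrite -(sc b) E IH. exact: H.
- move=> v g0 IH sb sq.
  have E : forall b, upd (fun n => sigma g (sb n)) v (sigma g b) = (fun n => sigma g (upd sb v b n)).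
    move=> b; apply: functional_extensionality => n; rewrite /upd; by case: (_ == _).
  split=> [[b H]|[b H]].
  + exists (sigma h b). rewrite -IH -E sc. exact: H.
  + exists (sigma g b). rewrite E IH. exact: H.
- move=> v g0 IH sb sq; split=> H r; [rewrite -IH|rewrite IH]; exact: H.
- move=> v g0 IH sb sq; split=> [[r H]|[r H]]; exists r; [rewrite -IH|rewrite IH]; exact: H.
Qed.

Lemma sprplus {d} ftl : @SPRplus d (mdl d ftl).
Proof. move=> phi hfree [fm|//] [fk|//] /= hm hk sb sq.
have [hm1 [hm' [c1 c2]]] := hm.
set g := fun x => fk (hm' x).
have hg : Lor g by apply: Lor_comp hk; exact: Lor_inv hm c1 c2.
have [_ [gi [d1 d2]]] := hg.
rewrite -(holds_sigma ftl hg d1 d2). apply: holds_free => n hn.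
rewrite (hfree n hn) /upd /= /g. congr Obs; apply: functional_extensionality => x. by rewrite c1.
Qed.

Lemma SR_mdl {d} ftl : (2 <= d)%N -> @SR d (mdl d ftl).
Proof. move=> hd; split; first exact: sprplus. split; first exact: axlight.
split; first exact: axev. split; first exact: ax_self. exact: axsymd. Qed.

Theorem theorem4p2 (d : nat) (hd : (2 <= d)%N) :
  (exists M : model d, SR M /\ AxThExp M /\ ExFTLBody M) /\
  (exists M : model d, SR M /\ AxThExp M /\ ~ ExFTLBody M).
Proof.
split.
- exists (mdl d true); split; [exact: SR_mdl|split; [exact: axthexp|exact: exftl]].
- exists (mdl d false); split; [exact: SR_mdl|split; [exact: axthexp|exact: noftl]].
Qed.
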